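(* Let $H$ be a group which is the union of finitely many subsets $S_1,\dots,S_n$: $H=\bigcup_{i=1}^n S_i$. For each $i$ set $C_i:=\langle ab^{-1}\mid a,b\in S_i\rangle$. Then at least one of the subgroups $C_1,\dots,C_n$ has index at most $n$ in $H$. *)

(* Defs.v *)
From Stdlib Require Import List Arith.

Record group := Group {
  carrier :> Type;
  gmul : carrier -> carrier -> carrier;
  ginv : carrier -> carrier;
  gone : carrier;
  gmulA : forall x y z, gmul x (gmul y z) = gmul (gmul x y) z;
  gmul1 : forall x, gmul gone x = x;
  gmulV : forall x, gmul (ginv x) x = gone
}.

Definition is_subgroup (H : group) (K : H -> Prop) : Prop :=
  K (gone H) /\ (forall x y, K x -> K y -> K (gmul H x (ginv H y))).

Definition generated (H : group) (A : H -> Prop) : H -> Prop :=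
  fun x => forall K, is_subgroup H K -> (forall a, A a -> K a) -> K x.

Definition diff_subgroup (H : group) (S : H -> Prop) : H -> Prop :=
  generated H (fun x => exists a b, S a /\ S b /\ x = gmul H a (ginv H b)).

(* [H : K] <= n : H is covered by at most n left cosets g K
   (h \in g K  iff  g^{-1} h \in K). *)
Definition index_le (H : group) (K : H -> Prop) (n : nat) : Prop :=
  exists reps : list H, length reps <= n /\
    forall h : H, exists g, In g reps /\ K (gmul H (ginv H g) h).

(* Main.v *)
Require Import Defs.
From Stdlib Require Import List Arith Lia Bool Classical ClassicalEpsilon.
Import ListNotations.

Local Notation "x ** y" := (gmul _ x y) (at level 40, left associativity).
Local Notation "x ^-1" := (ginv _ x) (at level 3).


Lemma gmulV' (H : group) (x : H) : x ** x^-1 = gone H.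
Proof.
  rewrite <- (gmul1 H (x ** x^-1)).
  rewrite <- (gmulV H (x^-1)) at 1.
  rewrite <- gmulA. rewrite (gmulA H (x^-1) x (x^-1)). rewrite gmulV, gmul1.
  apply gmulV.
Qed.

Lemma gmul1' (H : group) (x : H) : x ** gone H = x.
Proof. rewrite <- (gmulV H x), gmulA, gmulV', gmul1. reflexivity. Qed.

Lemma inv_uniq (H : group) (x y : H) : x ** y = gone H -> x^-1 = y.
Proof.
  intro E. rewrite <- (gmul1' H (x^-1)), <- E, gmulA, gmulV, gmul1. reflexivity.
Qed.

Lemma inv_inv (H : group) (x : H) : (x^-1)^-1 = x.
Proof. apply inv_uniq, gmulV. Qed.

Lemma inv_mul (H : group) (x y : H) : (x ** y)^-1 = y^-1 ** x^-1.
Proof.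
  apply inv_uniq. rewrite gmulA, <- (gmulA H x y), gmulV', gmul1', gmulV'. reflexivity.
Qed.

Lemma inv_one (H : group) : (gone H)^-1 = gone H.
Proof. apply inv_uniq, gmul1. Qed.

Lemma sg_inv (H : group) K (x : H) : is_subgroup H K -> K x -> K (x^-1).
Proof. intros [H1 H2] Kx. rewrite <- (gmul1 H (x^-1)). auto. Qed.

Lemma sg_mul (H : group) K (x y : H) : is_subgroup H K -> K x -> K y -> K (x ** y).
Proof.
  intros S Kx Ky. rewrite <- (inv_inv H y). apply (proj2 S); auto. apply sg_inv; auto.
Qed.


Definition covers (H : group) (L : list ((H -> Prop) * H)) :=
  forall h : H, exists e, In e L /\ fst e ((snd e)^-1 ** h).
Definition FI (H : group) (K : H -> Prop) := exists m, index_le H K m.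
Definition dec (P : Prop) : bool := if excluded_middle_informative P then true else false.
Lemma dec_true (P : Prop) : dec P = true <-> P.
Proof. unfold dec; destruct excluded_middle_informative; split; auto; discriminate. Qed.
Lemma dec_false (P : Prop) : dec P = false <-> ~ P.
Proof. unfold dec; destruct excluded_middle_informative; split; auto; try discriminate; tauto. Qed.

Lemma noinf (H : group) (SG : list (H -> Prop)) :
  (forall K, In K SG -> is_subgroup H K /\ ~ FI H K) ->
  forall L, (forall e, In e L -> In (fst e) SG) -> ~ covers H L.
Proof.
  induction SG as [|K SG IH]; intros HSG L HL Hc.
  - destruct (Hc (gone H)) as [e [He _]]. apply (HL e He).
  - set (R := filter (fun e => dec (In (fst e) SG)) L).
    set (KG := filter (fun e => negb (dec (In (fst e) SG))) L).
    assert (HKsub : is_subgroup H K) by (apply HSG; left; auto).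
    assert (HKinf : ~ FI H K) by (apply HSG; left; auto).
    assert (notR : forall e, In e L -> ~ In e R -> fst e = K /\ In e KG).
    { intros e He HnR. unfold R in HnR. rewrite filter_In in HnR.
      assert (dec (In (fst e) SG) = false).
      { destruct (dec (In (fst e) SG)) eqn:E; auto. exfalso; tauto. }
      split.
      - apply dec_false in H0. destruct (HL e He); auto. contradiction.
      - unfold KG; rewrite filter_In, H0; auto. }
    assert (Hx : exists x, forall g, In g (map snd KG) -> ~ K (g^-1 ** x)).
    { apply NNPP; intro N. apply HKinf. exists (length (map snd KG)), (map snd KG).
      split; auto. intro h. apply NNPP; intro N2. apply N. exists h.
      intros g Hg Kg. apply N2. eauto. }
    destruct Hx as [x Hx].
    assert (HxK : forall k, K k -> exists r, In r R /\ fst r ((snd r)^-1 ** (x ** k))).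
    { intros k Kk. destruct (Hc (x ** k)) as [e [He He2]].
      destruct (classic (In e R)) as [HR|HnR]; eauto.
      destruct (notR e He HnR) as [E1 E2]. exfalso.
      apply (Hx (snd e)). apply in_map; auto.
      rewrite E1 in He2.
      replace ((snd e)^-1 ** x) with ((snd e)^-1 ** (x ** k) ** k^-1).
      + apply sg_mul; auto. apply sg_inv; auto.
      + rewrite gmulA, <- (gmulA H _ k), gmulV', gmul1'. reflexivity. }
    apply (IH (fun K0 HK0 => HSG K0 (or_intror HK0))
              (R ++ flat_map (fun e => map (fun r => (fst r, snd e ** (x^-1 ** snd r))) R) L)).
    + intros e He. apply in_app_or in He. destruct He as [He|He].
      * unfold R in He; rewrite filter_In, dec_true in He; tauto.
      * apply in_flat_map in He. destruct He as [e0 [_ He]].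
        apply in_map_iff in He. destruct He as [r [Er Hr]]. subst e. simpl.
        unfold R in Hr; rewrite filter_In, dec_true in Hr; tauto.
    + intro h. destruct (Hc h) as [e [He He2]].
      destruct (classic (In e R)) as [HR|HnR].
      * exists e; split; auto. apply in_or_app; auto.
      * destruct (notR e He HnR) as [E1 _]. rewrite E1 in He2.
        destruct (HxK _ He2) as [r [Hr Hr2]].
        exists (fst r, snd e ** (x^-1 ** snd r)). split.
        -- apply in_or_app; right. apply in_flat_map. exists e; split; auto.
           apply in_map_iff. exists r; auto.
        -- simpl. rewrite !inv_mul, inv_inv.
           replace ((snd r)^-1 ** x ** (snd e)^-1 ** h) with ((snd r)^-1 ** (x ** ((snd e)^-1 ** h))); auto.
           rewrite !gmulA. reflexivity.
Qed.


Lemma index_ext (H : group) (K K' : H -> Prop) m :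
  (forall x, K x -> K' x) -> index_le H K m -> index_le H K' m.
Proof.
  intros E [r [Hl Hr]]. exists r; split; auto. intro h. destruct (Hr h) as [g [? ?]]; eauto.
Qed.

Lemma index_mono (H : group) (K : H -> Prop) m m' :
  m <= m' -> index_le H K m -> index_le H K m'.
Proof. intros E [r [Hl Hr]]. exists r; split; auto. lia. Qed.

Lemma length_flat_map_const {A B C} (f : A -> B -> C) (l1 : list A) (l2 : list B) :
  length (flat_map (fun u => map (f u) l2) l1) = length l1 * length l2.
Proof.
  induction l1; simpl; auto. rewrite length_app, length_map, IHl1. reflexivity.
Qed.

Lemma index_inter (H : group) (A B : H -> Prop) a b :
  is_subgroup H A -> is_subgroup H B -> index_le H A a -> index_le H B b ->
  index_le H (fun x => A x /\ B x) (a * b).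
Proof.
  intros SA SB [RA [HA HA2]] [RB [HB HB2]].
  set (ch := fun u v : H =>
    match excluded_middle_informative (exists w, A (u^-1 ** w) /\ B (v^-1 ** w)) with
    | left pf => proj1_sig (constructive_indefinite_description _ pf)
    | right _ => u end).
  exists (flat_map (fun u => map (ch u) RB) RA). split.
  - rewrite length_flat_map_const. apply Nat.mul_le_mono; auto.
  - intro h. destruct (HA2 h) as [u [Hu Hu2]]. destruct (HB2 h) as [v [Hv Hv2]].
    exists (ch u v). split.
    + apply in_flat_map. exists u; split; auto. apply in_map; auto.
    + unfold ch. destruct excluded_middle_informative as [pf|n].
      2:{ exfalso; apply n; eauto. }
      destruct (constructive_indefinite_description _ pf) as [w [Aw Bw]]. simpl.
      assert (E : forall (K : H -> Prop) u, is_subgroup H K -> K (u^-1 ** w) -> K (u^-1 ** h) -> K (w^-1 ** h)).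
      { intros K u0 SK K1 K2. replace (w^-1 ** h) with ((u0^-1 ** w)^-1 ** (u0^-1 ** h)).
        - apply sg_mul; auto. apply sg_inv; auto.
        - rewrite inv_mul, inv_inv, gmulA, <- (gmulA H _ u0), gmulV', gmul1'. reflexivity. }
      split; eapply E; eauto.
Qed.

Lemma FI_big (H : group) (F : list ((H -> Prop) * H)) :
  (forall e, In e F -> is_subgroup H (fst e) /\ FI H (fst e)) ->
  is_subgroup H (fun x => forall e, In e F -> fst e x) /\ FI H (fun x => forall e, In e F -> fst e x).
Proof.
  induction F as [|e0 F IH]; intros HF.
  - split.
    + split; simpl; tauto.
    + exists 1, [gone H]. split; simpl; auto. intro h; exists (gone H); simpl; split; auto; intros e [].
  - destruct IH as [S1 [m1 I1]]. { intros; apply HF; right; auto. }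
    destruct (HF e0 (or_introl eq_refl)) as [S0 [m0 I0]].
    split.
    + split.
      * intros e [<-|He]; [apply S0|apply S1; auto].
      * intros x y Hx Hy e [<-|He].
        -- apply (proj2 S0); [apply Hx|apply Hy]; left; reflexivity.
        -- apply (proj2 S1 x y); auto; intros; [apply Hx|apply Hy]; right; auto.
    + exists (m0 * m1). eapply index_ext. 2: apply (index_inter H _ _ _ _ S0 S1 I0 I1).
      intros x [? ?] e [<-|He]; auto.
Qed.


Lemma fincover (H : group) (L : list ((H -> Prop) * H)) :
  (forall e, In e L -> is_subgroup H (fst e)) -> covers H L ->
  covers H (filter (fun e => dec (FI H (fst e))) L).
Proof.
  intros HS Hc. set (F := filter (fun e => dec (FI H (fst e))) L).
  apply NNPP; intro N.
  assert (Hy : exists y, forall e, In e F -> ~ fst e ((snd e)^-1 ** y)).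
  { apply NNPP; intro N2. apply N. intro h. apply NNPP; intro N3. apply N2. exists h.
    intros e He He2. apply N3; eauto. }
  destruct Hy as [y Hy].
  destruct (FI_big H F) as [SD [m [P [_ HP]]]].
  { intros e He. unfold F in He. rewrite filter_In, dec_true in He. split; [apply HS|]; tauto. }
  set (R := filter (fun e => negb (dec (FI H (fst e)))) L).
  apply (noinf H (map fst R)) with
    (L := flat_map (fun p => map (fun e => (fst e, p ** (y^-1 ** snd e))) R) P).
  - intros K HK. apply in_map_iff in HK. destruct HK as [e [<- He]].
    unfold R in He. rewrite filter_In in He. destruct He as [He1 He2].
    split; auto. intro HF. rewrite (proj2 (dec_true _) HF) in He2. discriminate.
  - intros e He. apply in_flat_map in He. destruct He as [p [_ He]].
    apply in_map_iff in He. destruct He as [e0 [<- He0]]. simpl. apply in_map; auto.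
  - intro h. destruct (HP h) as [p [Hp Dp]].
    destruct (Hc (y ** (p^-1 ** h))) as [e [He He2]].
    destruct (dec (FI H (fst e))) eqn:E.
    + exfalso. assert (HeF : In e F) by (unfold F; rewrite filter_In; auto).
      apply (Hy e HeF).
      replace ((snd e)^-1 ** y) with ((snd e)^-1 ** (y ** (p^-1 ** h)) ** (p^-1 ** h)^-1).
      * apply sg_mul; auto. apply sg_inv; auto.
      * rewrite gmulA, <- (gmulA H _ (p^-1 ** h)), gmulV', gmul1'. reflexivity.
    + exists (fst e, p ** (y^-1 ** snd e)). split.
      * apply in_flat_map. exists p; split; auto. apply in_map_iff. exists e; split; auto.
        unfold R; rewrite filter_In, E; auto.
      * simpl. rewrite !inv_mul, inv_inv.
        replace ((snd e)^-1 ** y ** p^-1 ** h) with ((snd e)^-1 ** (y ** (p^-1 ** h))); auto.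
        rewrite !gmulA. reflexivity.
Qed.


Lemma co_sym (H : group) K (u v : H) : is_subgroup H K -> K (u^-1 ** v) -> K (v^-1 ** u).
Proof. intros S Kuv. replace (v^-1 ** u) with ((u^-1 ** v)^-1). apply sg_inv; auto.
  rewrite inv_mul, inv_inv. reflexivity. Qed.

Lemma co_trans (H : group) K (u v w : H) : is_subgroup H K -> K (u^-1 ** v) -> K (v^-1 ** w) -> K (u^-1 ** w).
Proof. intros S K1 K2. replace (u^-1 ** w) with ((u^-1 ** v) ** (v^-1 ** w)). apply sg_mul; auto.
  rewrite gmulA, <- (gmulA H _ v), gmulV', gmul1'. reflexivity. Qed.

Lemma co_refl (H : group) K (u : H) : is_subgroup H K -> K (u^-1 ** u).
Proof. intros S. rewrite gmulV. apply S. Qed.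

Lemma dedupe (H : group) D (l : list H) : is_subgroup H D ->
  exists P, (forall a, In a l -> exists p, In p P /\ D (p^-1 ** a)) /\
    (forall p1 p2, In p1 P -> In p2 P -> D (p1^-1 ** p2) -> p1 = p2) /\ NoDup P.
Proof.
  intros SD. induction l as [|a l IH].
  - exists []. repeat split; simpl; try tauto. constructor.
  - destruct IH as [P [H1 [H2 H3]]].
    destruct (classic (exists p, In p P /\ D (p^-1 ** a))) as [Ex|NEx].
    + exists P. split; [|split; auto]. intros b [<-|Hb]; auto.
    + exists (a :: P). repeat split.
      * intros b [<-|Hb]. exists a; split; [left; auto|apply co_refl; auto].
        destruct (H1 b Hb) as [p [? ?]]. exists p; split; [right|]; auto.
      * intros p1 p2 [<-|Hp1] [<-|Hp2] Dp; auto.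
        -- exfalso; apply NEx. exists p2; split; auto. apply co_sym; auto.
        -- exfalso; apply NEx. exists p1; split; auto.
      * constructor; auto. intro Ha. apply NEx. exists a; split; auto. apply co_refl; auto.
Qed.

Lemma sum_plus {A} (u v : A -> nat) (F : list A) :
  list_sum (map (fun e => u e + v e) F) = list_sum (map u F) + list_sum (map v F).
Proof. induction F; simpl; auto. rewrite IHF. lia. Qed.

Lemma sum_ind_ge1 {A} (b : A -> bool) (F : list A) :
  (exists e, In e F /\ b e = true) -> 1 <= list_sum (map (fun e => if b e then 1 else 0) F).
Proof.
  induction F as [|e0 F IH]; intros [e [He Hb]]; simpl in *. tauto.
  destruct He as [<-|He]. rewrite Hb; lia. specialize (IH (ex_intro _ e (conj He Hb))). lia.
Qed.

Lemma sum_filter {A E} (f : E -> A -> bool) (F : list E) (l : list A) :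
  (forall a, In a l -> exists e, In e F /\ f e a = true) ->
  length l <= list_sum (map (fun e => length (filter (f e) l)) F).
Proof.
  induction l as [|a l IH]; intros Hc; simpl. lia.
  rewrite (map_ext (fun e => length (if f e a then a :: filter (f e) l else filter (f e) l))
     (fun e => (if f e a then 1 else 0) + length (filter (f e) l))).
  2:{ intro e; destruct (f e a); reflexivity. }
  rewrite sum_plus. pose proof (sum_ind_ge1 (fun e => f e a) F (Hc a (or_introl eq_refl))).
  assert (length l <= list_sum (map (fun e => length (filter (f e) l)) F)) by (apply IH; intros; apply Hc; right; auto).
  lia.
Qed.

Lemma sum_le {A} (g : A -> nat) (F : list A) k :
  (forall e, In e F -> g e <= k) -> list_sum (map g F) <= length F * k.
Proof. induction F as [|e F IH]; simpl; intros Hk. lia. pose proof (Hk e (or_introl eq_refl)).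
  assert (list_sum (map g F) <= length F * k) by (apply IH; auto). lia. Qed.

Lemma pigeon {A} (g : A -> nat) (F : list A) N :
  1 <= N -> N <= list_sum (map g F) -> exists e, In e F /\ N <= length F * g e.
Proof.
  intros HN HS. apply NNPP; intro C.
  assert (Hk : forall e, In e F -> g e <= (N - 1) / length F).
  { intros e He. assert (~ N <= length F * g e) by (intro; apply C; eauto).
    assert (0 < length F) by (destruct F; simpl in *; [tauto|lia]).
    apply Nat.div_le_lower_bound; lia. }
  pose proof (sum_le g F _ Hk).
  assert (0 < length F) by (destruct F; simpl in *; lia).
  pose proof (Nat.Div0.mul_div_le (N - 1) (length F)). lia.
Qed.

Lemma nodup_map_inj {A B} (f : A -> B) (l : list A) :
  (forall a b, In a l -> In b l -> f a = f b -> a = b) -> NoDup l -> NoDup (map f l).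
Proof.
  induction l as [|a l IH]; intros Hi Hn; simpl; constructor.
  - intro Hin. apply in_map_iff in Hin. destruct Hin as [b [Eb Hb]].
    inversion Hn; subst. assert (b = a) by (apply Hi; simpl; auto). subst; tauto.
  - inversion Hn; subst. apply IH; auto. intros; apply Hi; simpl; auto.
Qed.

Lemma filter_split {A} (f h : A -> bool) (l : list A) :
  length (filter f l) = length (filter (fun a => f a && h a) l) + length (filter (fun a => f a && negb (h a)) l).
Proof. induction l as [|a l IH]; simpl; auto. destruct (f a), (h a); simpl; lia. Qed.


Lemma dec_t (P : Prop) : dec P = true -> P. Proof. apply dec_true. Qed.
Lemma dec_f (P : Prop) : dec P = false -> ~ P. Proof. apply dec_false. Qed.

Lemma greedy (H : group) (K : H -> Prop) (P : list H) c :
  is_subgroup H K ->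
  (forall y, c <= length (filter (fun p => dec (K (y^-1 ** p))) P)) ->
  forall n0 (g : H -> bool), (forall p q, K (p^-1 ** q) -> g p = g q) ->
  length (filter g P) <= n0 ->
  exists Q, length Q * c <= length (filter g P) /\
    forall p, In p P -> g p = true -> exists q, In q Q /\ K (q^-1 ** p).
Proof.
  intros SK Hc. induction n0 as [|n0 IH]; intros g Hg Hl.
  - exists []. split; simpl; [lia|]. intros p Hp Hgp.
    assert (In p (filter g P)) by (apply filter_In; auto).
    destruct (filter g P); simpl in *; [tauto|lia].
  - destruct (filter g P) as [|r rs] eqn:Ef.
    + exists []. split; simpl; [lia|]. intros p Hp Hgp.
      assert (In p (filter g P)) by (apply filter_In; auto). rewrite Ef in H0; destruct H0.
    + assert (Hr : In r P /\ g r = true) by (apply filter_In; rewrite Ef; left; auto).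
      set (inK := fun p => dec (K (r^-1 ** p))).
      set (g' := fun p => g p && negb (inK p)).
      assert (Hsplit := filter_split g inK P).
      assert (Eq : filter (fun a => g a && inK a) P = filter inK P).
      { apply filter_ext_in. intros a Ha. unfold inK.
        destruct (dec (K (r^-1 ** a))) eqn:E; [|apply andb_false_r].
        apply dec_t in E. assert (Ga : g a = g r) by (apply Hg; apply co_sym; auto).
        rewrite Ga, (proj2 Hr); reflexivity. }
      rewrite Eq in Hsplit. rewrite Ef in Hsplit.
      assert (Hc1 := Hc r). fold inK in Hc1.
      assert (Hr1 : 1 <= length (filter inK P)).
      { assert (In r (filter inK P)). { apply filter_In; split; [tauto|]. apply dec_true, co_refl; auto. }
        destruct (filter inK P); simpl in *; [tauto|lia]. }
      destruct (IH g') as [Q [HQ1 HQ2]].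
      { intros p q Kpq. unfold g', inK. rewrite (Hg p q Kpq). f_equal. f_equal.
        destruct (dec (K (r^-1 ** p))) eqn:E1, (dec (K (r^-1 ** q))) eqn:E2; auto.
        - apply dec_t in E1. apply dec_f in E2. exfalso; apply E2. eapply co_trans; eauto.
        - apply dec_f in E1. apply dec_t in E2. exfalso; apply E1. eapply co_trans; eauto. apply co_sym; auto. }
      { unfold g'. simpl in Hl, Hsplit. lia. }
      exists (r :: Q). split.
      * simpl. simpl in Hsplit. fold g' in Hsplit. lia.
      * intros p Hp Hgp. destruct (inK p) eqn:E.
        -- exists r; split; [left; auto|]. apply dec_t in E; auto.
        -- destruct (HQ2 p Hp) as [q [? ?]]. unfold g'; rewrite Hgp, E; auto.
           exists q; split; [right|]; auto.
Qed.


Lemma count_main (H : group) (F : list ((H -> Prop) * H)) :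
  (forall e, In e F -> is_subgroup H (fst e) /\ FI H (fst e)) -> covers H F ->
  exists e, In e F /\ index_le H (fst e) (length F).
Proof.
  intros HF Hc.
  destruct (FI_big H F HF) as [SD [m [P0 [_ HP0]]]].
  set (D := fun x => forall e, In e F -> fst e x) in *.
  destruct (dedupe H D P0 SD) as [P [HPc [HPd HPn]]].
  assert (cov : forall h, exists p, In p P /\ D (p^-1 ** h)).
  { intro h. destruct (HP0 h) as [p0 [Hp0 D0]]. destruct (HPc p0 Hp0) as [p [Hp Dp]].
    exists p; split; auto. eapply co_trans; eauto. }
  set (phi := fun h => proj1_sig (constructive_indefinite_description _ (cov h))).
  assert (Hphi : forall h, In (phi h) P /\ D ((phi h)^-1 ** h)).
  { intro h. unfold phi. destruct (constructive_indefinite_description _ (cov h)); auto. }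
  set (cnt := fun (K : H -> Prop) x => length (filter (fun p => dec (K (x^-1 ** p))) P)).
  assert (HN : 1 <= length P).
  { destruct (cov (gone H)) as [p [Hp _]]. destruct P; simpl in *; [tauto|lia]. }
  assert (HS : length P <= list_sum (map (fun e => cnt (fst e) (snd e)) F)).
  { apply (sum_filter (fun e p => dec (fst e ((snd e)^-1 ** p)))). intros p _.
    destruct (Hc p) as [e [He He2]]. exists e; split; auto. apply dec_true; auto. }
  destruct (pigeon _ F _ HN HS) as [e [He Hpig]].
  exists e; split; auto.
  destruct (HF e He) as [SK _].
  set (K := fst e) in *. set (x := snd e) in *.
  assert (DK : forall z, D z -> K z) by (intros z Dz; apply Dz; auto).
  assert (Hinj : forall y, cnt K x <= cnt K y).
  { intro y. unfold cnt. set (z := y ** x^-1).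
    set (l1 := filter (fun p => dec (K (x^-1 ** p))) P).
    rewrite <- (length_map (fun p => phi (z ** p)) l1).
    apply NoDup_incl_length.
    - apply nodup_map_inj; [|apply NoDup_filter; auto].
      intros a b Ha Hb Eab. unfold l1 in Ha, Hb. rewrite filter_In in Ha, Hb.
      apply HPd; [tauto|tauto|].
      destruct (Hphi (z ** a)) as [_ Da]. destruct (Hphi (z ** b)) as [_ Db].
      rewrite Eab in Da.
      assert (D ((z ** a)^-1 ** (z ** b))) by (eapply co_trans; [auto| apply co_sym; eauto | eauto]).
      replace (a^-1 ** b) with ((z ** a)^-1 ** (z ** b)); auto.
      rewrite inv_mul, gmulA, <- (gmulA H _ _ z), gmulV, gmul1'. reflexivity.
    - intros w Hw. apply in_map_iff in Hw. destruct Hw as [p [<- Hp]].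
      unfold l1 in Hp. rewrite filter_In in Hp. destruct Hp as [Hp Kp]. apply dec_t in Kp.
      destruct (Hphi (z ** p)) as [Hq Dq].
      apply filter_In; split; auto. apply dec_true.
      apply co_trans with (v := z ** p); auto.
      + replace (y^-1 ** (z ** p)) with (x^-1 ** p); auto.
        unfold z. rewrite !gmulA, gmulV, gmul1. reflexivity.
      + apply co_sym; auto. }
  destruct (greedy H K P (cnt K x) SK Hinj (length P) (fun _ => true)) as [Q [HQ1 HQ2]]; auto.
  { apply filter_length_le. }
  exists Q. split.
  - rewrite filter_true in HQ1. unfold cnt in *. nia.
  - intro h. destruct (cov h) as [p [Hp Dp]].
    destruct (HQ2 p Hp eq_refl) as [q [Hq Kq]]. exists q; split; auto.
    eapply co_trans; eauto.
Qed.


Lemma neumann (H : group) (L : list ((H -> Prop) * H)) :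
  (forall e, In e L -> is_subgroup H (fst e)) -> covers H L ->
  exists e, In e L /\ index_le H (fst e) (length L).
Proof.
  intros HS Hc. pose proof (fincover H L HS Hc) as HF.
  assert (HF2 : forall e, In e (filter (fun e => dec (FI H (fst e))) L) -> is_subgroup H (fst e) /\ FI H (fst e)).
  { intros e He. rewrite filter_In in He. destruct He as [He1 He2]. split; [apply HS; auto|].
    apply dec_t; auto. }
  destruct (count_main H _ HF2 HF) as [e [He Hi]].
  rewrite filter_In in He. exists e; split; [tauto|].
  eapply index_mono; [apply filter_length_le|eauto].
Qed.

Lemma generated_sub (H : group) A : is_subgroup H (generated H A).
Proof.
  split.
  - intros K SK _. apply SK.
  - intros x y Hx Hy K SK HA. apply (proj2 SK); [apply Hx|apply Hy]; auto.
Qed.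

Theorem corollary2p3 (H : group) (n : nat) (S : nat -> H -> Prop)
  (cover : forall h : H, exists i, i < n /\ S i h) :
  exists i, i < n /\ index_le H (diff_subgroup H (S i)) n.
Proof.
  set (b := fun i => match excluded_middle_informative (exists a, S i a) with
                     | left pf => proj1_sig (constructive_indefinite_description _ pf)
                     | right _ => gone H end).
  assert (Hb : forall i a, S i a -> S i (b i)).
  { intros i a Ha. unfold b. destruct excluded_middle_informative as [pf|N].
    - destruct (constructive_indefinite_description _ pf); auto.
    - exfalso; eauto. }
  set (L := map (fun i => (diff_subgroup H (S i), (b i)^-1)) (seq 0 n)).
  destruct (neumann H L) as [e [He Hi]].
  - intros e He. unfold L in He. apply in_map_iff in He. destruct He as [i [<- _]].
    apply generated_sub.
  - intro h. destruct (cover (h^-1)) as [i [Hi Si]].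
    exists (diff_subgroup H (S i), (b i)^-1). split.
    + unfold L. apply in_map_iff. exists i; split; auto. apply in_seq. lia.
    + simpl. rewrite inv_inv.
      replace (b i ** h) with ((h^-1 ** (b i)^-1)^-1) by (rewrite inv_mul, !inv_inv; reflexivity).
      apply sg_inv; [apply generated_sub|].
      intros K SK HK. apply HK. exists (h^-1), (b i). split; auto. split; eauto.
  - unfold L in He. apply in_map_iff in He. destruct He as [i [<- Hin]].
    apply in_seq in Hin. exists i. split; [lia|].
    unfold L in Hi. rewrite length_map, length_seq in Hi. exact Hi.
Qed.
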